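(* Let $G$ be a graph with a linear order $<$ on $V(G)$ satisfying the X-property, and let $s<t$ be vertices with $\operatorname{dist}(s,t)<\infty$. Then for every integer $k\ge 1$, the closed neighborhood $N[\alpha_s(k)]$ contains $\alpha_s(k-1)$ or $\beta_s(k-1)$.
   Context: The X-property: for all vertices $p<q<r<s$, if $\{p,r\}\in E(G)$ and $\{q,s\}\in E(G)$ then $\{p,s\}\in E(G)$. $N[v]$ is the closed neighborhood of $v$. For an integer $k\ge0$, $\alpha_s(k)$ (resp. $\beta_s(k)$) is the leftmost (resp. rightmost) vertex, w.r.t. $<$, that can be reached from $s$ by a path of length at most $k$ all of whose vertices $v$ satisfy $v\le t$. (In particular $\alpha_s(0)=\beta_s(0)=s$.) *)

(* Defs.v *)
From mathcomp Require Import all_boot all_order.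
Set Implicit Arguments. Unset Strict Implicit. Unset Printing Implicit Defensive.
Import Order.TTheory.
Local Open Scope order_scope.

Definition simple_graph (T : finType) (e : rel T) : Prop :=
  symmetric e /\ irreflexive e.

Definition X_property d (T : finOrderType d) (e : rel T) : Prop :=
  forall p q r s : T, p < q -> q < r -> r < s -> e p r -> e q s -> e p s.

Definition closed_nbhd (T : finType) (e : rel T) (v : T) : {set T} :=
  [set u | (u == v) || e v u].

(* Vertices reachable from s by a path (walk) of length at most k all of
   whose vertices v satisfy v <= t. *)
Definition reach d (T : finOrderType d) (e : rel T) (s t : T) (k : nat) : {set T} :=
  [set v | [exists p : (k.+1).-tuple T,
     [exists m : 'I_k.+1,
       [&& nth s p 0 == s,
           nth s p m == v,
           [forall i : 'I_k, (i < m)%N ==> e (nth s p i) (nth s p i.+1)] &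
           [forall i : 'I_k.+1, (i <= m)%N ==> (nth s p i <= t)]]]]].

(* alpha_s(k): leftmost such vertex (default s, which is reachable when s <= t). *)
Definition alpha d (T : finOrderType d) (e : rel T) (s t : T) (k : nat) : T :=
  \big[Order.min/s]_(v in reach e s t k) v.

Definition beta d (T : finOrderType d) (e : rel T) (s t : T) (k : nat) : T :=
  \big[Order.max/s]_(v in reach e s t k) v.

(* Main.v *)
Require Import Defs.
From mathcomp Require Import all_boot all_order.
Import Order.TTheory.
Local Open Scope order_scope.

Section Aux.
Variables (d : Order.disp_t) (T : finOrderType d) (e : rel T) (s t : T).

Lemma reachP k v : v \in reach e s t k <->
  exists f : nat -> T, exists m, [/\ (m <= k)%N, f 0%N = s, f m = v,
    (forall i, (i < m)%N -> e (f i) (f i.+1)) & (forall i, (i <= m)%N -> f i <= t)].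
Proof.
split.
- rewrite inE => /existsP [p /existsP [m /and4P [/eqP H0 /eqP Hm He Ht]]].
  exists (nth s p), m; split => //.
  + by rewrite -ltnS ltn_ord.
  + move=> i Hi.
    have Hik : (i < k)%N by apply: leq_trans Hi _; rewrite -ltnS ltn_ord.
    by move/forallP: He => /(_ (Ordinal Hik)) /= /implyP; apply.
  + move=> i Hi.
    have Hik : (i < k.+1)%N by apply: leq_ltn_trans Hi _; rewrite ltn_ord.
    by move/forallP: Ht => /(_ (Ordinal Hik)) /= /implyP; apply.
- case=> f [m [Hmk H0 Hm He Ht]].
  have Hn : forall j, (j < k.+1)%N -> nth s (mkseq f k.+1) j = f j.
    by move=> j Hj; rewrite nth_mkseq.
  rewrite inE; apply/existsP.
  exists (@Tuple k.+1 T (mkseq f k.+1) (introT eqP (size_mkseq f k.+1))).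
  apply/existsP; exists (Ordinal (Hmk : (m < k.+1)%N)).
  apply/and4P; split.
  + by rewrite /= H0.
  + by rewrite /= Hn // Hm.
  + apply/forallP => i; apply/implyP => Hi.
    have Hik : (i < k)%N := ltn_ord i.
    rewrite [nth _ _ i](Hn i (ltnW Hik)).
    rewrite [nth _ _ i.+1](Hn i.+1 Hik).
    exact: He.
  + apply/forallP => i; apply/implyP => Hi.
    rewrite [nth _ _ i](Hn i) ?ltn_ord //; exact: Ht.
Qed.

Lemma reach_le k v : v \in reach e s t k -> v <= t.
Proof. by case/reachP=> f [m [_ _ <- _ Ht]]; apply: Ht. Qed.

Lemma reach0 v : v \in reach e s t 0 -> v = s.
Proof. by case/reachP=> f [m [Hm H0 <- _ _]]; move: Hm; rewrite leqn0 => /eqP ->. Qed.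

Lemma reach_s k : s <= t -> s \in reach e s t k.
Proof.
move=> Hs; apply/reachP; exists (fun _ => s), 0%N; split => //.
Qed.

Lemma reach_mono k v : v \in reach e s t k -> v \in reach e s t k.+1.
Proof.
case/reachP=> f [m [Hm H0 Hv He Ht]]; apply/reachP; exists f, m; split => //.
exact: leqW.
Qed.

Lemma reach_monoL j k v : (j <= k)%N -> v \in reach e s t j -> v \in reach e s t k.
Proof.
move=> Hjk Hv; elim: k Hjk => [|k IH]; first by rewrite leqn0 => /eqP <-.
rewrite leq_eqVlt => /orP [/eqP <- //|]; rewrite ltnS => /IH; exact: reach_mono.
Qed.

Lemma reach_step k u v : u \in reach e s t k -> e u v -> v <= t ->
  v \in reach e s t k.+1.
Proof.
case/reachP=> f [m [Hm H0 Hu He Ht]] Huv Hvt; apply/reachP.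
exists (fun i => if (i <= m)%N then f i else v), m.+1; split => //.
- by rewrite ltnn.
- move=> i Hi; rewrite ltnS in Hi; rewrite Hi; case: (ltnP i m) => Him.
  + by apply: He.
  + have Ei : i = m by apply/eqP; rewrite eqn_leq Him Hi.
    by rewrite Ei Hu.
- by move=> i Hi; case: ifP => [Him|_]; [exact: Ht | exact: Hvt].
Qed.

Lemma reach_back k v : v \in reach e s t k.+1 ->
  v \in reach e s t k \/ exists2 u, u \in reach e s t k & e u v.
Proof.
case/reachP=> f [m [Hm H0 Hv He Ht]].
case: (ltnP m k.+1) => Hmk.
  by left; apply/reachP; exists f, m; split.
have Em : m = k.+1 by apply/eqP; rewrite eqn_leq Hm.
right; exists (f k).
  apply/reachP; exists f, k; split => //.
  + by move=> i Hi; apply: He; rewrite Em ltnS ltnW.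
  + by move=> i Hi; apply: Ht; rewrite Em leqW.
by rewrite -Hv Em; apply: He; rewrite Em.
Qed.

Lemma alpha_in k : s <= t -> alpha e s t k \in reach e s t k.
Proof.
move=> Hs; rewrite /alpha; apply: (big_ind (fun x => x \in reach e s t k)) => //.
- exact: reach_s.
- by move=> x y Hx Hy; rewrite minEle; case: ifP.
Qed.

Lemma beta_in k : s <= t -> beta e s t k \in reach e s t k.
Proof.
move=> Hs; rewrite /beta; apply: (big_ind (fun x => x \in reach e s t k)) => //.
- exact: reach_s.
- by move=> x y Hx Hy; rewrite maxEle; case: ifP.
Qed.

Lemma alpha_le k y : y \in reach e s t k -> alpha e s t k <= y.
Proof. by move=> Hy; rewrite /alpha; apply: (bigmin_le_cond _ (fun v => v) Hy). Qed.

Lemma beta_ge k y : y \in reach e s t k -> y <= beta e s t k.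
Proof. by move=> Hy; rewrite /beta; apply: (le_bigmax_cond _ (fun v => v) Hy). Qed.

End Aux.
Arguments reachP {d T e s t}.
Arguments reach_le {d T e s t k v}.
Arguments reach0 {d T e s t v}.
Arguments reach_s {d T e s t}.
Arguments reach_mono {d T e s t k v}.
Arguments reach_monoL {d T e s t j k v}.
Arguments reach_step {d T e s t k u v}.
Arguments reach_back {d T e s t k v}.
Arguments alpha_in {d T e s t}.
Arguments beta_in {d T e s t}.
Arguments alpha_le {d T e s t k y}.
Arguments beta_ge {d T e s t k y}.

Theorem lemma10 (d : Order.disp_t) (T : finOrderType d) (e : rel T)
  (Hg : simple_graph e) (HX : X_property e) (s t : T)
  (Hst : s < t) (Hdist : connect e s t) (k : nat) (Hk : (1 <= k)%N) :
  (alpha e s t k.-1 \in closed_nbhd e (alpha e s t k)) \/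
  (beta e s t k.-1 \in closed_nbhd e (alpha e s t k)).
Proof.
case: Hg => Hsym _.
have Hs : s <= t := ltW Hst.
case: k Hk => [//|n] _; rewrite [n.+1.-1]/=.
set a := alpha e s t n.+1.
have aR : a \in reach e s t n.+1 := @alpha_in _ _ e s t n.+1 Hs.
have at_ : a <= t := reach_le aR.
have nb : forall x, e a x -> x \in closed_nbhd e a.
  by move=> x Hx; rewrite inE Hx orbT.
case: (boolP (a \in reach e s t n)) => anR.
  left; have -> : alpha e s t n = a.
    apply/le_anti; rewrite alpha_le //=.
    by apply: alpha_le; apply: reach_mono; apply: alpha_in.
  by rewrite inE eqxx.
case: (reach_back aR) => [|[w wR ewa]]; first by rewrite (negbTE anR).
have eaw : e a w by rewrite Hsym.
have altR : forall y, y \in reach e s t n -> a < y.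
  move=> y yR; rewrite lt_neqAle alpha_le ?reach_mono // andbT.
  by apply/eqP => Ey; move: anR; rewrite Ey yR.
clearbody a; case: n aR anR wR ewa eaw altR => [|m] aR anR wR ewa eaw altR.
  left; have -> : alpha e s t 0 = w.
    by rewrite (reach0 (@alpha_in _ _ e s t 0 Hs)) (reach0 wR).
  exact: nb.
have NoAdj : forall u, u \in reach e s t m -> e a u -> False.
  move=> u uR eau; move: anR; rewrite (reach_step uR) //.
  by rewrite Hsym.
have wnR : w \notin reach e s t m.
  by apply/negP => wR'; apply: (NoAdj w wR' eaw).
have sR : s \in reach e s t m := @reach_s _ _ e s t m Hs.
case: (ltgtP s w) => Hsw; last first.
  by move: wnR; rewrite -Hsw sR.
- (* w < s *)
  have Down : forall j, (j <= m)%N -> forall y, y \in reach e s t j -> w < y.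
    elim=> [|j IH] Hj y yR.
      by rewrite (reach0 yR).
    have yRm : y \in reach e s t m := reach_monoL Hj yR.
    case: (reach_back yR) => [yR'|[u uR euy]].
      by apply: IH => //; apply: ltnW.
    have wu : w < u by apply: IH => //; apply: ltnW.
    case: (ltgtP w y) => // Hwy.
      exfalso; apply: (NoAdj u (reach_monoL (ltnW Hj) uR)).
      apply: (HX a y w u) => //.
        by apply: altR; apply: reach_mono.
      by rewrite Hsym.
    by move: wnR; rewrite Hwy yRm.
  set a' := alpha e s t m.+1.
  have a'R : a' \in reach e s t m.+1 := @alpha_in _ _ e s t m.+1 Hs.
  have a'w : a' <= w := alpha_le wR.
  case: (ltgtP a' w) => Ha'w; last by left; rewrite Ha'w; exact: nb.
    case: (reach_back a'R) => [a'R'|[u uR eua']].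
      by have := Down m (leqnn m) a' a'R'; rewrite ltNge a'w.
    have wu : w < u := Down m (leqnn m) u uR.
    exfalso; apply: (NoAdj u uR); apply: (HX a a' w u) => //.
      by apply: altR.
    by rewrite Hsym.
  by move: a'w; rewrite leNgt Ha'w.
- (* s < w *)
  have Up : forall j, (j <= m)%N -> forall y, y \in reach e s t j -> y < w.
    elim=> [|j IH] Hj y yR.
      by rewrite (reach0 yR).
    have yRm : y \in reach e s t m := reach_monoL Hj yR.
    case: (reach_back yR) => [yR'|[u uR euy]].
      by apply: IH => //; apply: ltnW.
    have uw : u < w by apply: IH => //; apply: ltnW.
    case: (ltgtP y w) => // Hwy.
      exfalso; apply: (NoAdj y yRm).
      apply: (HX a u w y) => //.
      by apply: altR; apply: reach_mono; apply: (reach_monoL (ltnW Hj) uR).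
    by move: wnR; rewrite -Hwy yRm.
  set b' := beta e s t m.+1.
  have b'R : b' \in reach e s t m.+1 := @beta_in _ _ e s t m.+1 Hs.
  have wb' : w <= b' := beta_ge wR.
  case: (ltgtP w b') => Hwb'; last by right; rewrite -Hwb'; exact: nb.
    case: (reach_back b'R) => [b'R'|[u uR eub']].
      by have := Up m (leqnn m) b' b'R'; rewrite ltNge wb'.
    have uw : u < w := Up m (leqnn m) u uR.
    right; apply: nb; apply: (HX a u w b') => //.
    by apply: altR; apply: reach_mono.
  by move: wb'; rewrite leNgt Hwb'.
Qed.
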